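(* Let $(X,d)$ be a compact metric space and $f:X\to X$ continuous. Suppose (1) there is $(z,w)\in CR(f)^2$ with $z\sim w$ and such that $(z,w)$ has property*; and (2) for every sequence $(x_i)_{i\ge0}$ of points of $CR(f)$ with $\lim_{i\to\infty}d(f(x_i),x_{i+1})=0$ there is $x\in X$ with $\lim_{n\to\infty}\frac1n\sum_{i=0}^{n-1}d(f^i(x),x_i)=0$. Then $f$ exhibits DC1.
   Context: A $\delta$-chain of $f$ is a finite sequence $(x_i)_{i=0}^k$, $k\ge1$, with $d(f(x_i),x_{i+1})\le\delta$ for $0\le i<k$; a $\delta$-cycle is a $\delta$-chain with $x_0=x_k$. $CR(f)$ is the set of points $x$ such that for every $\delta>0$ there is a $\delta$-cycle starting and ending at $x$. For $x,y\in CR(f)$, $x\sim y$ iff for every $\delta>0$ there are integers $m>0$, $N>0$ such that for every $n\ge N$ there are $\delta$-chains $(x_i)_{i=0}^{mn},(y_i)_{i=0}^{mn}$ in $CR(f)$ with $x_0=y_{mn}=x$, $x_{mn}=y_0=y$. A pair $(x,y)\in CR(f)^2$ has property* if there is $r>0$ such that for every $\delta>0$ there are $\delta$-cycles $(x_i)_{i=0}^k,(y_i)_{i=0}^k$ of $f$ in $CR(f)$ (same length $k$) with $x_0=x_k=x$, $y_0=y_k=y$ and $d(x_i,y_i)>r$ for all $0\le i\le k$. A pair $(x,y)$ is a DC1-pair if $\limsup_{n}\frac1n|\{0\le i<n: d(f^i(x),f^i(y))<\delta\}|=1$ for all $\delta>0$ and $\limsup_{n}\frac1n|\{0\le i<n: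 d(f^i(x),f^i(y))>\delta_0\}|=1$ for some $\delta_0>0$; $f$ exhibits DC1 if there is an uncountable $S\subset X$ any two distinct points of which form a DC1-pair. *)

(* Defs.v *)
From Stdlib Require Import Reals Lra List.
Open Scope R_scope.

Definition is_metric {X : Type} (d : X -> X -> R) : Prop :=
  (forall x y, 0 <= d x y) /\
  (forall x y, d x y = 0 <-> x = y) /\
  (forall x y, d x y = d y x) /\
  (forall x y z, d x z <= d x y + d y z).

Definition is_open {X : Type} (d : X -> X -> R) (U : X -> Prop) : Prop :=
  forall x, U x -> exists eps, 0 < eps /\ forall y, d x y < eps -> U y.

Definition compact_space {X : Type} (d : X -> X -> R) : Prop :=
  forall (I : Type) (U : I -> X -> Prop),
    (forall i, is_open d (U i)) ->
    (forall x, exists i, U i x) ->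
    exists l : list I, forall x, exists i, In i l /\ U i x.

Definition continuous_map {X : Type} (d : X -> X -> R) (f : X -> X) : Prop :=
  forall x eps, 0 < eps ->
    exists delta, 0 < delta /\ forall y, d x y < delta -> d (f x) (f y) < eps.

Fixpoint iter {X : Type} (f : X -> X) (n : nat) (x : X) : X :=
  match n with O => x | S n' => f (iter f n' x) end.

Definition is_chain {X : Type} (d : X -> X -> R) (f : X -> X) (delta : R)
  (xs : nat -> X) (k : nat) : Prop :=
  (1 <= k)%nat /\ forall i, (i < k)%nat -> d (f (xs i)) (xs (S i)) <= delta.

Definition CR {X : Type} (d : X -> X -> R) (f : X -> X) (x : X) : Prop :=
  forall delta, 0 < delta ->
    exists (xs : nat -> X) (k : nat),
      is_chain d f delta xs k /\ xs O = x /\ xs k = x.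

Definition chain_in_CR {X : Type} (d : X -> X -> R) (f : X -> X)
  (xs : nat -> X) (k : nat) : Prop :=
  forall i, (i <= k)%nat -> CR d f (xs i).

Definition CR_sim {X : Type} (d : X -> X -> R) (f : X -> X) (x y : X) : Prop :=
  forall delta, 0 < delta ->
    exists m N : nat, (0 < m)%nat /\ (0 < N)%nat /\
      forall n, (N <= n)%nat ->
        exists xs ys : nat -> X,
          is_chain d f delta xs (m * n) /\ chain_in_CR d f xs (m * n) /\
          is_chain d f delta ys (m * n) /\ chain_in_CR d f ys (m * n) /\
          xs O = x /\ ys (m * n)%nat = x /\ xs (m * n)%nat = y /\ ys O = y.

Definition property_star {X : Type} (d : X -> X -> R) (f : X -> X) (x y : X) : Prop :=
  exists r, 0 < r /\
    forall delta, 0 < delta ->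
      exists (xs ys : nat -> X) (k : nat),
        is_chain d f delta xs k /\ chain_in_CR d f xs k /\
        is_chain d f delta ys k /\ chain_in_CR d f ys k /\
        xs O = x /\ xs k = x /\ ys O = y /\ ys k = y /\
        forall i, (i <= k)%nat -> d (xs i) (ys i) > r.

Fixpoint sum_lt (u : nat -> R) (n : nat) : R :=
  match n with O => 0 | S n' => sum_lt u n' + u n' end.

Definition count_lt (P : nat -> Prop) (Pdec : forall i, {P i} + {~ P i}) (n : nat) : R :=
  sum_lt (fun i => if Pdec i then 1 else 0) n.

Definition limsup_eq (u : nat -> R) (L : R) : Prop :=
  (forall eps, 0 < eps -> forall N, exists n, (N <= n)%nat /\ L - eps < u n) /\
  (forall eps, 0 < eps -> exists N, forall n, (N <= n)%nat -> u n < L + eps).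

Definition DC1_pair {X : Type} (d : X -> X -> R) (f : X -> X) (x y : X) : Prop :=
  (forall delta, 0 < delta ->
     limsup_eq (fun n =>
       count_lt (fun i => d (iter f i x) (iter f i y) < delta)
                (fun i => Rlt_dec (d (iter f i x) (iter f i y)) delta) n / INR n) 1) /\
  (exists delta0, 0 < delta0 /\
     limsup_eq (fun n =>
       count_lt (fun i => d (iter f i x) (iter f i y) > delta0)
                (fun i => Rgt_dec (d (iter f i x) (iter f i y)) delta0) n / INR n) 1).

Definition countable_set {X : Type} (S : X -> Prop) : Prop :=
  exists h : X -> nat, forall x y, S x -> S y -> h x = h y -> x = y.

Definition exhibits_DC1 {X : Type} (d : X -> X -> R) (f : X -> X) : Prop :=
  exists S : X -> Prop, ~ countable_set S /\
    forall x y, S x -> S y -> x <> y -> DC1_pair d f x y.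

(* Main.v *)
Require Import Defs.
From Stdlib Require Import Reals Lra Lia Arith ClassicalEpsilon FunctionalExtensionality Classical.
Open Scope R_scope.

Lemma count_le_n (P : nat -> Prop) Pd n : count_lt P Pd n <= INR n.
Proof.
  induction n as [|n IH]; unfold count_lt in *; simpl sum_lt.
  - simpl; lra.
  - rewrite S_INR. destruct (Pd n); lra.
Qed.

Lemma count_zero (P : nat -> Prop) Pd n : (forall i, ~ P i) -> count_lt P Pd n = 0.
Proof.
  intro H. induction n as [|n IH]; unfold count_lt in *; simpl sum_lt; [reflexivity|].
  rewrite IH. destruct (Pd n) as [p|]; [destruct (H n p)|lra].
Qed.

Lemma div_ge0 a t : 0 <= a -> 0 < t -> 0 <= a / t.
Proof. intros. unfold Rdiv. apply Rmult_le_pos; [lra| left; apply Rinv_0_lt_compat; lra]. Qed.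

Lemma div_ge1 a t : t <= a -> 0 < t -> 1 <= a / t.
Proof.
  intros. unfold Rdiv. rewrite <- (Rinv_r t) by lra.
  apply Rmult_le_compat_r; [left; apply Rinv_0_lt_compat|]; lra.
Qed.

Lemma count_lower (P : nat -> Prop) Pd (a b : nat -> R) t K n :
  0 < t -> (forall i, 0 <= a i) -> (forall i, 0 <= b i) ->
  (forall i, (K <= i)%nat -> (i < n)%nat -> a i + b i < t -> P i) ->
  count_lt P Pd n >= INR n - INR K - (sum_lt a n + sum_lt b n) / t.
Proof.
  intros Ht Ha Hb.
  assert (Hm : forall n, (forall i, (K <= i)%nat -> (i < n)%nat -> a i + b i < t -> P i) ->
     count_lt P Pd n >= INR n - INR (Nat.min n K) - (sum_lt a n + sum_lt b n) / t).
  { clear n. induction n as [|n IH]; intro H.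
    - simpl. unfold count_lt; simpl. unfold Rdiv. rewrite Rplus_0_l, Rmult_0_l. lra.
    - assert (IH' := IH (fun i h1 h2 => H i h1 ltac:(lia))).
      unfold count_lt in *. simpl sum_lt.
      replace ((sum_lt a n + a n + (sum_lt b n + b n)) / t) with
        ((sum_lt a n + sum_lt b n) / t + (a n + b n) / t) by (unfold Rdiv; ring).
      assert (0 <= (a n + b n) / t) by (apply div_ge0; [specialize (Ha n); specialize (Hb n); lra|lra]).
      destruct (Nat.lt_ge_cases n K) as [h|h].
      + rewrite Nat.min_l in IH' by lia. rewrite Nat.min_l by lia. rewrite S_INR.
        destruct (Pd n); lra.
      + rewrite Nat.min_r in IH' by lia. rewrite Nat.min_r by lia. rewrite S_INR.
        destruct (Rlt_dec (a n + b n) t) as [hl|hl].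
        * assert (P n) by (apply H; lia || lra).
          destruct (Pd n); [lra|contradiction].
        * assert (1 <= (a n + b n) / t) by (apply div_ge1; lra).
          destruct (Pd n); lra. }
  intro H. specialize (Hm n H).
  assert (INR (Nat.min n K) <= INR K) by (apply le_INR; lia). lra.
Qed.

Lemma sum_nonneg (a : nat -> R) n : (forall i, 0 <= a i) -> 0 <= sum_lt a n.
Proof. intro H; induction n; simpl; [lra|]. specialize (H n); lra. Qed.

Lemma lt_div (a c t : R) : 0 < t -> a * t < c -> a < c / t.
Proof.
  intros Ht H. apply Rmult_lt_reg_r with t; [lra|].
  unfold Rdiv. rewrite Rmult_assoc, Rinv_l by lra. lra.
Qed.

Lemma div_lt (a c t : R) : 0 < t -> a / t < c -> a < c * t.
Proof.
  intros Ht H. replace a with ((a / t) * t) by (field; lra).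
  apply Rmult_lt_compat_r; lra.
Qed.

Lemma lower_part (P : nat -> Prop) Pd (a b : nat -> R) t :
  0 < t -> (forall i, 0 <= a i) -> (forall i, 0 <= b i) ->
  Un_cv (fun n => sum_lt a n / INR n) 0 -> Un_cv (fun n => sum_lt b n / INR n) 0 ->
  (forall eps, 0 < eps -> forall N, exists K n, (N <= n)%nat /\ INR K <= eps * INR n /\
      forall i, (K <= i)%nat -> (i < n)%nat -> a i + b i < t -> P i) ->
  limsup_eq (fun n => count_lt P Pd n / INR n) 1.
Proof.
  intros Ht Ha Hb Hca Hcb Htimes. split.
  - intros eps He N.
    destruct (Hca (eps * t / 4)) as [N1 HN1]. { apply Rlt_gt. unfold Rdiv. apply Rmult_lt_0_compat; [apply Rmult_lt_0_compat|]; lra. }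
    destruct (Hcb (eps * t / 4)) as [N2 HN2]. { apply Rlt_gt. unfold Rdiv. apply Rmult_lt_0_compat; [apply Rmult_lt_0_compat|]; lra. }
    destruct (Htimes (eps / 4) ltac:(lra) (N + N1 + N2 + 1)%nat) as [K [n [Hn [HK Hi]]]].
    exists n. split; [lia|].
    assert (Hn0 : 0 < INR n) by (apply lt_0_INR; lia).
    assert (HA := HN1 n ltac:(lia)). assert (HB := HN2 n ltac:(lia)).
    unfold Rdist in HA, HB. rewrite Rminus_0_r in HA, HB.
    apply Rabs_def2 in HA. apply Rabs_def2 in HB. destruct HA as [HA _], HB as [HB _].
    apply div_lt in HA; [|lra]. apply div_lt in HB; [|lra].
    assert (Hc := count_lower P Pd a b t K n Ht Ha Hb Hi).
    assert (Hab : (sum_lt a n + sum_lt b n) / t < eps / 2 * INR n).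
    { apply Rmult_lt_reg_r with t; [lra|]. unfold Rdiv at 1.
      rewrite Rmult_assoc, Rinv_l by lra. nra. }
    apply lt_div; [lra|]. nra.
  - intros eps He. exists 1%nat. intros n Hn.
    assert (Hn0 : 0 < INR n) by (apply lt_0_INR; lia).
    assert (H := count_le_n P Pd n).
    assert (count_lt P Pd n / INR n <= 1).
    { apply Rmult_le_reg_r with (INR n); [lra|]. unfold Rdiv.
      rewrite Rmult_assoc, Rinv_l by lra. lra. }
    lra.
Qed.

Lemma dc1_from {X : Type} (d : X -> X -> R) (f : X -> X) (xs ys : nat -> X) (x y : X) (r : R) :
  is_metric d -> 0 < r ->
  Un_cv (fun n => sum_lt (fun i => d (iter f i x) (xs i)) n / INR n) 0 ->
  Un_cv (fun n => sum_lt (fun i => d (iter f i y) (ys i)) n / INR n) 0 ->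
  (forall eps, 0 < eps -> forall N, exists K n, (N <= n)%nat /\ INR K <= eps * INR n /\
      forall i, (K <= i)%nat -> (i < n)%nat -> xs i = ys i) ->
  (forall eps, 0 < eps -> forall N, exists K n, (N <= n)%nat /\ INR K <= eps * INR n /\
      forall i, (K <= i)%nat -> (i < n)%nat -> d (xs i) (ys i) > r) ->
  DC1_pair d f x y.
Proof.
  intros [Hpos [Hid [Hsym Htri]]] Hr Hx Hy Hclose Hfar. split.
  - intros delta Hd.
    apply (lower_part _ _ (fun i => d (iter f i x) (xs i)) (fun i => d (iter f i y) (ys i)) delta); auto.
    intros eps He N. destruct (Hclose eps He N) as [K [n [H1 [H2 H3]]]].
    exists K, n. split; [|split]; auto. intros i h1 h2 h3.
    rewrite (H3 i h1 h2) in h3.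
    assert (T := Htri (iter f i x) (ys i) (iter f i y)). rewrite (Hsym (ys i) (iter f i y)) in T. lra.
  - exists (r / 2). split; [lra|].
    apply (lower_part _ _ (fun i => d (iter f i x) (xs i)) (fun i => d (iter f i y) (ys i)) (r/2)); auto; [lra|].
    intros eps He N. destruct (Hfar eps He N) as [K [n [H1 [H2 H3]]]].
    exists K, n. split; [|split]; auto. intros i h1 h2 h3.
    assert (H := H3 i h1 h2).
    assert (T1 := Htri (xs i) (iter f i x) (ys i)).
    assert (T2 := Htri (iter f i x) (iter f i y) (ys i)).
    rewrite (Hsym (xs i) (iter f i x)) in T1.
    simpl in h3. lra.
Qed.

Lemma dc1_neq {X : Type} (d : X -> X -> R) (f : X -> X) (x y : X) :
  is_metric d -> DC1_pair d f x y -> x <> y.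
Proof.
  intros [Hpos [Hid _]] [_ [d0 [Hd0 [Hl _]]]] Exy. subst y.
  destruct (Hl (1/2) ltac:(lra) 0%nat) as [n [_ Hn]].
  rewrite count_zero in Hn.
  - unfold Rdiv in Hn. rewrite Rmult_0_l in Hn. lra.
  - intros i. rewrite (proj2 (Hid _ _) eq_refl). lra.
Qed.

Definition good {X : Type} (d : X -> X -> R) (f : X -> X) (dl : R) (g : nat -> X) (L : nat) (a b : X) : Prop :=
  g O = a /\ g L = b /\ (forall i, (i < L)%nat -> d (f (g i)) (g (S i)) <= dl) /\
  (forall i, (i <= L)%nat -> CR d f (g i)).

Definition cat {X : Type} (g1 : nat -> X) (L1 : nat) (g2 : nat -> X) : nat -> X :=
  fun i => if Nat.ltb i L1 then g1 i else g2 (i - L1)%nat.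

Definition rep {X : Type} (g : nat -> X) (k : nat) : nat -> X := fun i => g (i mod k)%nat.

Lemma cat_lt {X : Type} (g1 g2 : nat -> X) L1 i : (i < L1)%nat -> cat g1 L1 g2 i = g1 i.
Proof. intro h. unfold cat. apply Nat.ltb_lt in h. now rewrite h. Qed.

Lemma cat_ge {X : Type} (g1 g2 : nat -> X) L1 i : (L1 <= i)%nat -> cat g1 L1 g2 i = g2 (i - L1)%nat.
Proof. intro h. unfold cat. apply Nat.ltb_ge in h. now rewrite h. Qed.

Lemma cat_good {X : Type} (d : X -> X -> R) f dl g1 L1 g2 L2 a b c :
  good d f dl g1 L1 a b -> good d f dl g2 L2 b c -> good d f dl (cat g1 L1 g2) (L1 + L2) a c.
Proof.
  intros [A1 [B1 [C1 D1]]] [A2 [B2 [C2 D2]]]. repeat split.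
  - destruct (Nat.eq_dec L1 0) as [e|e].
    + rewrite cat_ge by lia. subst L1. simpl. rewrite A2, <- B1. exact A1.
    + rewrite cat_lt by lia. exact A1.
  - rewrite cat_ge by lia. replace (L1 + L2 - L1)%nat with L2 by lia. exact B2.
  - intros i hi. destruct (Nat.lt_ge_cases (S i) L1) as [h|h].
    + rewrite !cat_lt by lia. apply C1; lia.
    + destruct (Nat.lt_ge_cases i L1) as [h'|h'].
      * rewrite cat_lt by lia. rewrite cat_ge by lia.
        replace (S i - L1)%nat with O by lia. rewrite A2, <- B1.
        replace L1 with (S i) by lia. apply C1; lia.
      * rewrite !cat_ge by lia. replace (S i - L1)%nat with (S (i - L1)) by lia. apply C2; lia.
  - intros i hi. destruct (Nat.lt_ge_cases i L1) as [h|h].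
    + rewrite cat_lt by lia. apply D1; lia.
    + rewrite cat_ge by lia. apply D2; lia.
Qed.

Lemma rep_good {X : Type} (d : X -> X -> R) f dl P k z T :
  (1 <= k)%nat -> P O = z -> P k = z -> (forall i, (i < k)%nat -> d (f (P i)) (P (S i)) <= dl) ->
  (forall i, (i <= k)%nat -> CR d f (P i)) ->
  good d f dl (rep P k) (k * T) z z.
Proof.
  intros hk A B C D. unfold rep. repeat split.
  - rewrite Nat.Div0.mod_0_l. exact A.
  - rewrite Nat.mul_comm, Nat.Div0.mod_mul. exact A.
  - intros i _. assert (hm := Nat.mod_upper_bound i k ltac:(lia)).
    assert (hd := Nat.div_mod i k ltac:(lia)).
    destruct (Nat.lt_ge_cases (S (i mod k)) k) as [h|h].
    + replace (S i mod k)%nat with (S (i mod k)).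
      * apply C; lia.
      * apply (Nat.mod_unique _ _ (i / k)); lia.
    + replace (S i mod k)%nat with O.
      * rewrite A, <- B. replace k with (S (i mod k)) at 2 by lia. apply C; lia.
      * apply (Nat.mod_unique _ _ (S (i / k))); nia.
  - intros i _. apply D. assert (hm := Nat.mod_upper_bound i k ltac:(lia)). lia.
Qed.

Record StageData (X : Type) := mkSD { sU : nat -> X; sV : nat -> X; sa : nat; sb : nat; sg : nat; sL : nat }.
Arguments mkSD {X}. Arguments sU {X}. Arguments sV {X}. Arguments sa {X}. Arguments sb {X}.
Arguments sg {X}. Arguments sL {X}.

Definition stage_ok {X : Type} (d : X -> X -> R) (f : X -> X) (z : X) (r : R) (m Sv : nat) (D : StageData X) : Prop :=
  good d f (/ INR (S m)) (sU D) (sL D) z z /\ good d f (/ INR (S m)) (sV D) (sL D) z z /\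
  (1 <= sa D)%nat /\ (sa D <= sb D)%nat /\ (sb D <= sg D)%nat /\ (sg D <= sL D)%nat /\
  (S m * Sv <= Sv + sa D)%nat /\ (S m * (Sv + sb D) <= Sv + sg D)%nat /\
  (forall i, (i < sa D)%nat -> sU D i = sV D i) /\
  (forall i, (sb D <= i)%nat -> (i < sg D)%nat -> d (sU D i) (sV D i) > r).

Lemma chain_good {X : Type} (d : X -> X -> R) f dl g L a b :
  is_chain d f dl g L -> chain_in_CR d f g L -> g O = a -> g L = b -> good d f dl g L a b.
Proof. intros [_ H1] H2 H3 H4. repeat split; auto. Qed.

Lemma stage_exists {X : Type} (d : X -> X -> R) (f : X -> X) (z w : X) (r : R) :
  CR_sim d f z w ->
  (forall delta, 0 < delta ->
      exists (xs ys : nat -> X) (k : nat),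
        is_chain d f delta xs k /\ chain_in_CR d f xs k /\
        is_chain d f delta ys k /\ chain_in_CR d f ys k /\
        xs O = z /\ xs k = z /\ ys O = w /\ ys k = w /\
        forall i, (i <= k)%nat -> d (xs i) (ys i) > r) ->
  forall m Sv, exists D, stage_ok d f z r m Sv D.
Proof.
  intros Hsim Hstar m Sv.
  set (dl := / INR (S m)).
  assert (Hdl : 0 < dl) by (apply Rinv_0_lt_compat, lt_0_INR; lia).
  destruct (Hstar dl Hdl) as [P [Q [k [HP [HPc [HQ [HQc [P0 [Pk [Q0 [Qk Hfar]]]]]]]]]]].
  destruct (Hsim dl Hdl) as [c [N0 [Hc [HN0 Hch]]]].
  destruct (Hch N0 (le_n _)) as [Z1 [W1 [HZ1 [HZ1c [HW1 [HW1c [Z10 [W1L [Z1L W10]]]]]]]]].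
  destruct (Hch (2 * N0)%nat ltac:(lia)) as [Z2 [W2 [HZ2 [HZ2c [HW2 [HW2c [Z20 [W2L [Z2L W20]]]]]]]]].
  set (L := (c * N0)%nat) in *. set (L2 := (c * (2 * N0))%nat) in *.
  assert (EL : L2 = (L + L)%nat) by (unfold L, L2; lia).
  assert (hk : (1 <= k)%nat) by (destruct HP; auto).
  set (al := (k * (S m * Sv + 1))%nat).
  set (T := (S m * (Sv + (al + L + L)) + 1)%nat).
  assert (GP : forall T', good d f dl (rep P k) (k * T') z z)
    by (intro T'; destruct HP as [_ HP]; apply rep_good; auto).
  assert (GQ : forall T', good d f dl (rep Q k) (k * T') w w)
    by (intro T'; destruct HQ as [_ HQ]; apply rep_good; auto).
  assert (GZ1 : good d f dl Z1 L z w) by (apply chain_good; auto).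
  assert (GW1 : good d f dl W1 L w z) by (apply chain_good; auto).
  assert (GZ2 : good d f dl Z2 L2 z w) by (apply chain_good; auto).
  assert (GW2 : good d f dl W2 L2 w z) by (apply chain_good; auto).
  exists (mkSD (cat (rep P k) al (cat Z1 L (cat W1 L (cat (rep P k) (k * T) (cat Z1 L W1)))))
               (cat (rep P k) al (cat Z2 L2 (cat (rep Q k) (k * T) W2)))
               al (al + L + L)%nat (al + L + L + k * T)%nat (al + L + L + k * T + L + L)%nat).
  unfold stage_ok; simpl. split; [|split].
  - replace (al + L + L + k * T + L + L)%nat with (al + (L + (L + (k * T + (L + L)))))%nat by lia.
    apply cat_good with z; [apply GP|]. apply cat_good with w; auto.
    apply cat_good with z; auto. apply cat_good with z; [apply GP|]. apply cat_good with w; auto.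
  - replace (al + L + L + k * T + L + L)%nat with (al + (L2 + (k * T + L2)))%nat by lia.
    apply cat_good with z; [apply GP|]. apply cat_good with w; auto.
    apply cat_good with w; auto.
  - repeat split.
    + unfold al; nia.
    + lia.
    + lia.
    + lia.
    + unfold al; nia.
    + unfold T; nia.
    + intros i hi. rewrite !cat_lt by lia. reflexivity.
    + intros i h1 h2.
      rewrite cat_ge by lia. rewrite cat_ge by lia. rewrite cat_ge by lia. rewrite cat_lt by lia.
      rewrite (cat_ge (rep P k)) by lia. rewrite cat_ge by lia. rewrite cat_lt by lia.
      replace (i - al - L2)%nat with (i - al - L - L)%nat by lia.
      unfold rep. apply Hfar. assert (hm := Nat.mod_upper_bound (i - al - L - L) k ltac:(lia)). lia.
Qed.

Fixpoint Sm {X : Type} (st : nat -> nat -> StageData X) (m : nat) : nat :=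
  match m with O => O | S m' => (Sm st m' + sL (st m' (Sm st m')))%nat end.

Fixpoint stg {X : Type} (st : nat -> nat -> StageData X) (i : nat) : nat :=
  match i with
  | O => O
  | S i' => let m := stg st i' in if Nat.leb (Sm st (S m)) (S i') then S m else m
  end.

Definition jj (m : nat) : nat := (m - Nat.sqrt m * Nat.sqrt m)%nat.

Lemma jj_inf j M : exists m, (M <= m)%nat /\ jj m = j.
Proof.
  exists ((M + j + 1) * (M + j + 1) + j)%nat. split; [nia|].
  unfold jj. rewrite (Nat.sqrt_unique _ (M + j + 1)) by nia. lia.
Qed.


Definition Wf {X : Type} (st : nat -> nat -> StageData X) (s : nat -> bool) (m : nat) : nat -> X :=
  if s (jj m) then sU (st m (Sm st m)) else sV (st m (Sm st m)).

Definition xseq {X : Type} (st : nat -> nat -> StageData X) (s : nat -> bool) (i : nat) : X :=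
  Wf st s (stg st i) (i - Sm st (stg st i))%nat.

Lemma Sm_S {X : Type} (st : nat -> nat -> StageData X) m :
  Sm st (S m) = (Sm st m + sL (st m (Sm st m)))%nat.
Proof. reflexivity. Qed.

Lemma Sm_mono {X : Type} (st : nat -> nat -> StageData X) :
  (forall m Sv, (1 <= sL (st m Sv))%nat) -> forall m m', (m <= m')%nat -> (Sm st m + (m' - m) <= Sm st m')%nat.
Proof.
  intros Hp m m' h. induction h.
  - lia.
  - rewrite Sm_S. specialize (Hp m0 (Sm st m0)). lia.
Qed.

Lemma stg_spec {X : Type} (st : nat -> nat -> StageData X) :
  (forall m Sv, (1 <= sL (st m Sv))%nat) -> forall i, (Sm st (stg st i) <= i < Sm st (S (stg st i)))%nat.
Proof.
  intros Hp i. induction i as [|i IH].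
  - simpl. specialize (Hp O O). lia.
  - assert (ES : stg st (S i) = if Nat.leb (Sm st (S (stg st i))) (S i) then S (stg st i) else stg st i) by reflexivity.
    rewrite ES. destruct (Nat.leb (Sm st (S (stg st i))) (S i)) eqn:E.
    + apply Nat.leb_le in E. split; [auto|].
      pose proof (Sm_S st (S (stg st i))). specialize (Hp (S (stg st i)) (Sm st (S (stg st i)))). lia.
    + apply Nat.leb_gt in E. lia.
Qed.

Lemma stg_unique {X : Type} (st : nat -> nat -> StageData X) :
  (forall m Sv, (1 <= sL (st m Sv))%nat) -> forall m i, (Sm st m <= i < Sm st (S m))%nat -> stg st i = m.
Proof.
  intros Hp m i h. assert (hs := stg_spec st Hp i).
  destruct (Nat.lt_total (stg st i) m) as [l|[e|l]]; auto.
  - assert (hm := Sm_mono st Hp (S (stg st i)) m l). lia.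
  - assert (hm := Sm_mono st Hp (S m) (stg st i) l). lia.
Qed.

Lemma xseq_in {X : Type} (st : nat -> nat -> StageData X) s :
  (forall m Sv, (1 <= sL (st m Sv))%nat) -> forall m i, (Sm st m <= i < Sm st (S m))%nat ->
  xseq st s i = Wf st s m (i - Sm st m)%nat.
Proof. intros Hp m i h. unfold xseq. rewrite (stg_unique st Hp m i h). reflexivity. Qed.


Lemma Hp_of {X : Type} (d : X -> X -> R) f z r (st : nat -> nat -> StageData X) :
  (forall m Sv, stage_ok d f z r m Sv (st m Sv)) -> forall m Sv, (1 <= sL (st m Sv))%nat.
Proof. intros H m Sv. destruct (H m Sv) as [_ [_ [h1 [h2 [h3 [h4 _]]]]]]. lia. Qed.

Lemma Wf_good {X : Type} (d : X -> X -> R) f z r (st : nat -> nat -> StageData X) s m :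
  (forall m Sv, stage_ok d f z r m Sv (st m Sv)) ->
  good d f (/ INR (S m)) (Wf st s m) (sL (st m (Sm st m))) z z.
Proof. intros H. destruct (H m (Sm st m)) as [g1 [g2 _]]. unfold Wf. destruct (s (jj m)); auto. Qed.

Lemma xseq_next {X : Type} (d : X -> X -> R) f z r (st : nat -> nat -> StageData X) s i :
  (forall m Sv, stage_ok d f z r m Sv (st m Sv)) ->
  xseq st s (S i) = Wf st s (stg st i) (S i - Sm st (stg st i))%nat.
Proof.
  intros H. assert (Hp := Hp_of d f z r st H).
  assert (hs := stg_spec st Hp i). set (m := stg st i) in *.
  destruct (Nat.lt_ge_cases (S i) (Sm st (S m))) as [h|h].
  - apply xseq_in; auto. lia.
  - assert (e : S i = Sm st (S m)) by lia.
    assert (hs2 := Sm_S st (S m)). assert (Hp1 := Hp (S m) (Sm st (S m))).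
    rewrite (xseq_in st s Hp (S m) (S i)) by lia.
    destruct (Wf_good d f z r st s (S m) H) as [A _].
    destruct (Wf_good d f z r st s m H) as [_ [B _]].
    rewrite e, Nat.sub_diag, A. rewrite Sm_S. replace (Sm st m + sL (st m (Sm st m)) - Sm st m)%nat
      with (sL (st m (Sm st m))) by lia. auto.
Qed.

Lemma xseq_err {X : Type} (d : X -> X -> R) f z r (st : nat -> nat -> StageData X) s i :
  (forall m Sv, stage_ok d f z r m Sv (st m Sv)) ->
  d (f (xseq st s i)) (xseq st s (S i)) <= / INR (S (stg st i)).
Proof.
  intros H. assert (Hp := Hp_of d f z r st H).
  assert (hs := stg_spec st Hp i). rewrite (xseq_next d f z r st s i H).
  unfold xseq. destruct (Wf_good d f z r st s (stg st i) H) as [_ [_ [C _]]].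
  rewrite Sm_S in hs. replace (S i - Sm st (stg st i))%nat with (S (i - Sm st (stg st i))) by lia.
  apply C. lia.
Qed.

Lemma xseq_CR {X : Type} (d : X -> X -> R) f z r (st : nat -> nat -> StageData X) s i :
  (forall m Sv, stage_ok d f z r m Sv (st m Sv)) -> CR d f (xseq st s i).
Proof.
  intros H. assert (Hp := Hp_of d f z r st H).
  assert (hs := stg_spec st Hp i). unfold xseq.
  destruct (Wf_good d f z r st s (stg st i) H) as [_ [_ [_ D]]].
  rewrite Sm_S in hs. apply D. lia.
Qed.

Lemma Sm_ge {X : Type} (st : nat -> nat -> StageData X) :
  (forall m Sv, (1 <= sL (st m Sv))%nat) -> forall m, (m <= Sm st m)%nat.
Proof. intros Hp m. assert (h := Sm_mono st Hp 0 m ltac:(lia)). simpl in h. lia. Qed.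

Lemma stg_large {X : Type} (st : nat -> nat -> StageData X) :
  (forall m Sv, (1 <= sL (st m Sv))%nat) -> forall M i, (Sm st M <= i)%nat -> (M <= stg st i)%nat.
Proof.
  intros Hp M i h. assert (hs := stg_spec st Hp i).
  destruct (Nat.le_gt_cases M (stg st i)) as [l|l]; auto.
  assert (hm := Sm_mono st Hp (S (stg st i)) M l). lia.
Qed.

Lemma xseq_cv {X : Type} (d : X -> X -> R) f z r (st : nat -> nat -> StageData X) s :
  is_metric d ->
  (forall m Sv, stage_ok d f z r m Sv (st m Sv)) ->
  Un_cv (fun i => d (f (xseq st s i)) (xseq st s (S i))) 0.
Proof.
  intros Hm H eps He. assert (Hp := Hp_of d f z r st H).
  destruct (archimed_cor1 eps He) as [M [HM HM0]].
  exists (Sm st M). intros i hi. unfold Rdist. rewrite Rminus_0_r.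
  rewrite Rabs_right by (apply Rle_ge; apply (proj1 Hm)).
  eapply Rle_lt_trans; [apply (xseq_err d f z r st s i H)|].
  eapply Rle_lt_trans; [|exact HM].
  apply Rinv_le_contravar; [apply lt_0_INR; lia|]. apply le_INR.
  assert (h := stg_large st Hp M i hi). lia.
Qed.

Lemma ratio_bound (K n m : nat) (eps : R) (M : nat) :
  0 < eps -> / INR M < eps -> (0 < M)%nat -> (M <= S m)%nat -> (S m * K <= n)%nat ->
  INR K <= eps * INR n.
Proof.
  intros He HM HM0 hm hK.
  assert (h1 : INR (S m) * INR K <= INR n) by (rewrite <- mult_INR; apply le_INR; lia).
  assert (h2 : INR M <= INR (S m)) by (apply le_INR; lia).
  assert (h3 : 0 < INR M) by (apply lt_0_INR; lia).
  assert (h4 : 1 < eps * INR M).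
  { apply Rmult_lt_compat_r with (r := INR M) in HM; auto. rewrite Rinv_l in HM; lra. }
  assert (h5 : 0 <= INR K) by apply pos_INR.
  assert (h6 : 1 <= eps * INR (S m)) by nra.
  assert (h7 : INR K <= eps * INR (S m) * INR K) by nra.
  assert (h8 : eps * (INR (S m) * INR K) <= eps * INR n) by (apply Rmult_le_compat_l; lra).
  nra.
Qed.

Lemma close_times {X : Type} (d : X -> X -> R) f z r (st : nat -> nat -> StageData X) s s' :
  (forall m Sv, stage_ok d f z r m Sv (st m Sv)) ->
  forall eps, 0 < eps -> forall N, exists K n, (N <= n)%nat /\ INR K <= eps * INR n /\
      forall i, (K <= i)%nat -> (i < n)%nat -> xseq st s i = xseq st s' i.
Proof.
  intros H eps He N. assert (Hp := Hp_of d f z r st H).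
  destruct (archimed_cor1 eps He) as [M [HM HM0]].
  set (m := (N + M)%nat).
  destruct (H m (Sm st m)) as [_ [_ [h1 [h2 [h3 [h4 [h5 [h6 [h7 h8]]]]]]]]].
  exists (Sm st m), (Sm st m + sa (st m (Sm st m)))%nat. split; [|split].
  - assert (h := Sm_ge st Hp m). unfold m in *. lia.
  - apply (ratio_bound _ _ m eps M); auto; unfold m; lia.
  - intros i hi1 hi2. assert (hs := Sm_S st m).
    rewrite (xseq_in st s Hp m i) by lia. rewrite (xseq_in st s' Hp m i) by lia.
    unfold Wf. destruct (s (jj m)), (s' (jj m)); rewrite ?(h7 (i - Sm st m)%nat) by lia; reflexivity.
Qed.

Lemma far_times {X : Type} (d : X -> X -> R) f z r (st : nat -> nat -> StageData X) s s' j :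
  is_metric d -> s j <> s' j ->
  (forall m Sv, stage_ok d f z r m Sv (st m Sv)) ->
  forall eps, 0 < eps -> forall N, exists K n, (N <= n)%nat /\ INR K <= eps * INR n /\
      forall i, (K <= i)%nat -> (i < n)%nat -> d (xseq st s i) (xseq st s' i) > r.
Proof.
  intros Hm Hj H eps He N. assert (Hp := Hp_of d f z r st H).
  destruct (archimed_cor1 eps He) as [M [HM HM0]].
  destruct (jj_inf j (N + M)) as [m [hm hjm]].
  destruct (H m (Sm st m)) as [_ [_ [h1 [h2 [h3 [h4 [h5 [h6 [h7 h8]]]]]]]]].
  exists (Sm st m + sb (st m (Sm st m)))%nat, (Sm st m + sg (st m (Sm st m)))%nat. split; [|split].
  - assert (h := Sm_ge st Hp m). lia.
  - apply (ratio_bound _ _ m eps M); auto; lia.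
  - intros i hi1 hi2. assert (hs := Sm_S st m).
    rewrite (xseq_in st s Hp m i) by lia. rewrite (xseq_in st s' Hp m i) by lia.
    unfold Wf. rewrite hjm.
    assert (hf := h8 (i - Sm st m)%nat ltac:(lia) ltac:(lia)).
    destruct (s j), (s' j); try (exfalso; apply Hj; reflexivity); auto.
    destruct Hm as [_ [_ [Hsym _]]]. rewrite Hsym. auto.
Qed.

Lemma cantor (g : (nat -> bool) -> nat) : ~ (forall s s', g s = g s' -> s = s').
Proof.
  intro Hinj.
  set (F := fun n => match excluded_middle_informative (exists s, g s = n) with
                     | left h => proj1_sig (constructive_indefinite_description _ h)
                     | right _ => fun _ => false end).
  set (dg := fun n => negb (F n n)).
  assert (E : F (g dg) = dg).
  { unfold F. destruct (excluded_middle_informative (exists s, g s = g dg)) as [h|h].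
    - destruct (constructive_indefinite_description _ h) as [s hs]. simpl. apply Hinj. exact hs.
    - exfalso. apply h. eauto. }
  assert (E2 : dg (g dg) = negb (F (g dg) (g dg))) by reflexivity.
  rewrite E in E2. destruct (dg (g dg)); discriminate.
Qed.

Theorem lemma4p1 (X : Type) (d : X -> X -> R) (f : X -> X)
  (Hmet : is_metric d) (Hcpt : compact_space d) (Hcont : continuous_map d f)
  (H1 : exists z w, CR d f z /\ CR d f w /\ CR_sim d f z w /\ property_star d f z w)
  (H2 : forall xs : nat -> X,
          (forall i, CR d f (xs i)) ->
          Un_cv (fun i => d (f (xs i)) (xs (S i))) 0 ->
          exists x, Un_cv (fun n => sum_lt (fun i => d (iter f i x) (xs i)) n / INR n) 0) :
  exhibits_DC1 d f.
Proof.
  destruct H1 as [z [w [Hz [Hw [Hsim [r [Hr Hstar]]]]]]].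
  assert (Hex := stage_exists d f z w r Hsim Hstar).
  set (st := fun m Sv => proj1_sig (constructive_indefinite_description _ (Hex m Sv))).
  assert (Hst : forall m Sv, stage_ok d f z r m Sv (st m Sv))
    by (intros m Sv; unfold st; apply proj2_sig).
  assert (Hsh : forall s, exists x, Un_cv (fun n => sum_lt (fun i => d (iter f i x) (xseq st s i)) n / INR n) 0).
  { intro s. apply H2.
    - intro i. apply (xseq_CR d f z r st s i Hst).
    - apply (xseq_cv d f z r st s Hmet Hst). }
  set (p := fun s => proj1_sig (constructive_indefinite_description _ (Hsh s))).
  assert (Hp : forall s, Un_cv (fun n => sum_lt (fun i => d (iter f i (p s)) (xseq st s i)) n / INR n) 0)
    by (intro s; unfold p; apply proj2_sig).
  assert (Hdc : forall s s', s <> s' -> DC1_pair d f (p s) (p s')).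
  { intros s s' hne.
    assert (hj : exists j, s j <> s' j).
    { apply NNPP. intro hn. apply hne. apply functional_extensionality. intro j.
      apply NNPP. intro hj. apply hn. eauto. }
    destruct hj as [j hj].
    apply (dc1_from d f (xseq st s) (xseq st s') (p s) (p s') r Hmet Hr (Hp s) (Hp s')).
    - apply (close_times d f z r st s s' Hst).
    - apply (far_times d f z r st s s' j Hmet hj Hst). }
  exists (fun y => exists s, y = p s). split.
  - intros [h Hh]. apply (cantor (fun s => h (p s))). intros s s' e.
    apply NNPP. intro hne. apply (dc1_neq d f (p s) (p s') Hmet (Hdc s s' hne)).
    apply Hh; eauto.
  - intros x y [s ->] [s' ->] hne. apply Hdc. intro e. apply hne. rewrite e. reflexivity.
Qed.
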